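(* Let $\mathcal L^{(\alpha_H)}_n$ and $\mathcal L_n$ be the sum-level sets of the alternating and the classical Lüroth maps, as in the context. Then, as $n\to\infty$: (1) $\displaystyle\sum_{k=1}^n\lambda(\mathcal L_k)=\sum_{k=1}^n\lambda(\mathcal L^{(\alpha_H)}_k)\sim n\Big(\sum_{k=1}^n\frac1k\Big)^{-1}\sim\frac{n}{\log n}$; (2) $\displaystyle\lambda(\mathcal L_n)=\lambda(\mathcal L^{(\alpha_H)}_n)\sim\Big(\sum_{k=1}^n\frac1k\Big)^{-1}\sim\frac1{\log n}$.
   Context: $\lambda$ is Lebesgue measure on $\mathcal U=[0,1]$. The harmonic partition $\alpha_H=\{A_n\}$ has $A_n=(1/(n+1),1/n]$. The alternating Lüroth map is $L_{\alpha_H}(x)=-n(n+1)x+(n+1)$ for $x\in A_n$, $L_{\alpha_H}(0)=0$; its cylinders are $C(\ell_1,\dots,\ell_k)=\{x:L_{\alpha_H}^{i-1}(x)\in A_{\ell_i},\ i=1,\dots,k\}$ and $\mathcal L^{(\alpha_H)}_n$ is the union of all $C(\ell_1,\dots,\ell_k)$, $k\in\mathbb N$, with $\sum_i\ell_i=n$. The classical Lüroth map is $L(x)=n(n+1)x-n$ for $x\in[1/(n+1),1/n)$, $n\ge2$, $L(x)=2x-1$ for $x\in[1/2,1]$, $L(0)=0$; with digit intervals $B_1=[1/2,1]$, $B_n=[1/(n+1),1/n)$ for $n\ge2$, its cylinders are $\{x:L^{i-1}(x)\in B_{\ell_i},\ i=1,\dots,k\}$ and $\mathcal L_n$ is the union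 of those cylinders with $\sum_i\ell_i=n$. $a_n\sim b_n$ means $a_n/b_n\to1$. *)

(* Defs.v *)
From HB Require Import structures.
From mathcomp Require Import all_boot all_order all_algebra.
From mathcomp Require Import all_classical all_reals all_analysis.
Set Implicit Arguments. Unset Strict Implicit. Unset Printing Implicit Defensive.
Import Order.TTheory GRing.Theory Num.Theory.
Import numFieldNormedType.Exports.
Local Open Scope classical_set_scope.
Local Open Scope ring_scope.

Section Luroth.
Variable R : realType.

Definition unitI : set R := [set x | 0 <= x <= 1].

Definition harmA (n : nat) : set R :=
  [set x | (n.+1%:R)^-1 < x <= (n%:R)^-1].

(* alternating Lüroth map: for x in A_n, n = floor(1/x) *)
Definition Lalt (x : R) : R :=
  if x == 0 then 0 else
  let n : R := (Num.floor (x^-1))%:~R in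
  - (n * (n + 1)) * x + (n + 1).

Definition lurB (n : nat) : set R :=
  if n == 1%N then [set x | 2^-1 <= x <= 1]
  else [set x | (n.+1%:R)^-1 <= x < (n%:R)^-1].

(* classical Lüroth map: for x in B_n (n >= 2), n = ceil(1/x) - 1 *)
Definition Lcl (x : R) : R :=
  if x == 0 then 0 else
  if 2^-1 <= x then 2 * x - 1 else
  let n : R := (Num.ceil (x^-1) - 1)%:~R in
  n * (n + 1) * x - n.

Definition cylinder (T : R -> R) (D : nat -> set R) (s : seq nat) : set R :=
  [set x | unitI x /\ forall i, (i < size s)%N -> D (nth 0%N s i) (iter i T x)].

Definition sumlevel (T : R -> R) (D : nat -> set R) (n : nat) : set R :=
  [set x | exists s : seq nat, [/\ (0 < size s)%N, all (fun l => 0 < l)%N s,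
            sumn s = n & cylinder T D s x]].

Definition Lalt_level (n : nat) : set R := sumlevel Lalt harmA n.
Definition Lcl_level (n : nat) : set R := sumlevel Lcl lurB n.

Definition asym_equiv (a b : nat -> R) : Prop :=
  (fun n => a n / b n) @ \oo --> (1 : R).

Definition harm (n : nat) : R := \sum_(1 <= k < n.+1) (k%:R)^-1.

End Luroth.

(* Main.v *)
Require Import Defs.
From HB Require Import structures.
From mathcomp Require Import all_boot all_order all_algebra.
From mathcomp Require Import all_classical all_reals all_analysis.
From mathcomp Require Import ring lra zify.
Import Order.TTheory GRing.Theory Num.Theory.
Import numFieldNormedType.Exports.
Set Implicit Arguments. Unset Strict Implicit. Unset Printing Implicit Defensive.
Local Open Scope classical_set_scope.
Local Open Scope ring_scope.

Section Good.
Variable R : realType.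
Implicit Types (I : seq (R * R)) (S : set R).

Definition Ou I : set R := [set x | has (fun p => (p.1 < x < p.2)) I].
Definition Cu I : set R := [set x | has (fun p => (p.1 <= x <= p.2)) I].
Fixpoint disj I : Prop :=
  if I is p :: I' then (forall x, p.1 < x < p.2 -> ~ Ou I' x) /\ disj I' else True.
Definition okI I := all (fun p => (0 <= p.1) && (p.1 <= p.2) && (p.2 <= 1)) I.
Definition len I : R := \sum_(p <- I) (p.2 - p.1).
Definition Good S (t : R) := exists I,
  [/\ okI I, disj I, Ou I `<=` S, S `<=` Cu I & len I = t].

Lemma Ou_cons p I : Ou (p :: I) = `]p.1, p.2[ `|` Ou I.
Proof. by apply/seteqP; split => x /=; rewrite /Ou /= in_itv /=; move/orP. Qed.
Lemma Cu_cons p I : Cu (p :: I) = `[p.1, p.2] `|` Cu I.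
Proof. by apply/seteqP; split => x /=; rewrite /Cu /= in_itv /=; move/orP. Qed.

Lemma Ou_nil : Ou [::] = set0. Proof. by apply/seteqP; split=> x. Qed.
Lemma Cu_nil : Cu [::] = set0. Proof. by apply/seteqP; split=> x. Qed.

Lemma Ou_meas I : measurable (Ou I : set (measurableTypeR R)).
Proof.
elim: I => [|p I IH]; first by rewrite Ou_nil.
by rewrite Ou_cons; apply: measurableU.
Qed.
Lemma Cu_meas I : measurable (Cu I : set (measurableTypeR R)).
Proof.
elim: I => [|p I IH]; first by rewrite Cu_nil.
by rewrite Cu_cons; apply: measurableU.
Qed.

Lemma Ou_measure I : okI I -> disj I -> lebesgue_measure (Ou I) = (len I)%:E.
Proof.
elim: I => [|p I IH]; first by move=> _ _; rewrite /len big_nil; rewrite Ou_nil measure0.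
move=> /= /andP[/andP[/andP[h0 h1] h2] hI] [hd dI].
rewrite Ou_cons measureU //; last first.
- by apply/seteqP; split => x //= [] /[!in_itv] /= /hd.
- exact: Ou_meas.
change (lebesgue_measure `]p.1,p.2[%classic + lebesgue_measure (Ou I) = (len (p :: I))%:E)%E.
rewrite IH // lebesgue_measure_itv /= /len big_cons EFinD.
rewrite lte_fin; case: ltP => hlt; first by rewrite EFinB.
have -> : p.2 = p.1 by apply/eqP; rewrite eq_le h1 hlt.
by rewrite subrr add0e.
Qed.

Lemma Cu_measure I : okI I -> (lebesgue_measure (Cu I) <= (len I)%:E)%E.
Proof.
elim: I => [|p I IH]; first by move=> _; rewrite /len big_nil Cu_nil measure0.
move=> /= /andP[/andP[/andP[h0 h1] h2] hI].
rewrite Cu_cons.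
apply: le_trans (measureU2 _ _ _) _ => //; first exact: Cu_meas.
change (lebesgue_measure `[p.1,p.2]%classic + lebesgue_measure (Cu I) <= (len (p :: I))%:E)%E.
rewrite /len big_cons EFinD lebesgue_measure_itv /= lte_fin.
apply: leeD; last exact: IH.
by case: ltP => hlt; rewrite ?lee_fin ?subr_ge0.
Qed.

Lemma lebesgue_mono (A B : set R) : A `<=` B ->
  (@lebesgue_measure R A <= @lebesgue_measure R B)%E.
Proof. move=> AB. exact: le_mu_ext. Qed.

Lemma Good_measure S t : Good S t -> lebesgue_measure S = t%:E.
Proof.
move=> [I [oI dI OS SC <-]]; apply/eqP; rewrite eq_le; apply/andP; split.
  by apply: le_trans (Cu_measure oI); apply: lebesgue_mono.
by rewrite -Ou_measure //; apply: lebesgue_mono.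
Qed.

Lemma disj_cat I1 I2 : disj I1 -> disj I2 -> (forall x, Ou I1 x -> ~ Ou I2 x) ->
  disj (I1 ++ I2).
Proof.
elim: I1 => [|p I1 IH] //= [hd d1] d2 h; split; last first.
  by apply: IH => // x hx; apply: h; rewrite /Ou /= hx orbT.
move=> x hx; rewrite /Ou /= has_cat => /orP[].
  exact: hd.
by apply: h; rewrite /Ou /= hx.
Qed.

Lemma Good_union S1 S2 t1 t2 : Good S1 t1 -> Good S2 t2 ->
  (forall x, S1 x -> ~ S2 x) -> Good (S1 `|` S2) (t1 + t2).
Proof.
move=> [J1 [k1 d1 O1 C1 e1]] [J2 [k2 d2 O2 C2 e2]] h; rewrite -e1 -e2.
exists (J1 ++ J2); split.
- by rewrite /okI all_cat; apply/andP.
- by apply: disj_cat => // x /O1 /h hx /O2.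
- by move=> x; rewrite /Ou /= has_cat => /orP[/O1|/O2]; [left|right].
- by move=> x [/C1|/C2]; rewrite /Cu /= has_cat => ->; rewrite ?orbT.
- by rewrite /len big_cat.
Qed.
End Good.

Definition pl {R : realType} (l : nat) : R := (l%:R * l.+1%:R)^-1.

Fixpoint uf {R : realType} (f n : nat) : R :=
  if f is f'.+1 then (if n is 0 then 1 else \sum_(1 <= l < n.+1) pl l * uf f' (n - l))
  else 1.
Definition u {R : realType} (n : nat) : R := uf n n.

Lemma uf_fuel {R : realType} f1 f2 n : (n <= f1)%N -> (n <= f2)%N ->
  uf f1 n = uf f2 n :> R.
Proof.
elim: f1 f2 n => [|f1 IH] f2 n h1 h2.
  by move: h1; rewrite leqn0 => /eqP ->; case: f2 {h2}.
case: n h1 h2 => [|n] h1 h2; first by case: f2 {h2}.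
case: f2 h2 => // f2 h2 /=.
apply: eq_big_nat => l /andP[l1 l2]; congr (_ * _); apply: IH.
  by lia.
by lia.
Qed.

Lemma uE {R : realType} n : (0 < n)%N ->
  u n = \sum_(1 <= l < n.+1) pl l * u (n - l) :> R.
Proof.
case: n => // n _; rewrite /u /=; apply: eq_big_nat => l /andP[l1 l2].
congr (_ * _); apply: uf_fuel => //.
by lia.
Qed.

Lemma u0 {R : realType} : u 0 = 1 :> R. Proof. by []. Qed.

Section Step.
Variable R : realType.
Variables (T : R -> R) (D : nat -> set R) (c d : nat -> R -> R -> R).
Hypothesis HDu : forall l x, (0 < l)%N -> D l x -> unitI x.
Hypothesis HTu : forall l x, (0 < l)%N -> D l x -> unitI (T x).
Hypothesis Hcd : forall l a b, (0 < l)%N -> 0 <= a -> a <= b -> b <= 1 ->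
  [/\ 0 <= c l a b, c l a b <= d l a b, d l a b <= 1 &
      d l a b - c l a b = (b - a) * pl l].
Hypothesis Hin : forall l a b x, (0 < l)%N -> 0 <= a -> a <= b -> b <= 1 ->
  c l a b < x < d l a b -> D l x /\ a < T x < b.
Hypothesis Hout : forall l a b x, (0 < l)%N -> 0 <= a -> a <= b -> b <= 1 ->
  D l x -> a <= T x <= b -> c l a b <= x <= d l a b.

Definition piece (S : set R) l := [set x | unitI x /\ D l x /\ S (T x)].

Let mapI l (I : seq (R * R)) := map (fun q => (c l q.1 q.2, d l q.1 q.2)) I.

Let OuMap l I x : (0 < l)%N -> okI I -> Ou (mapI l I) x -> D l x /\ Ou I (T x).
Proof.
move=> l0; elim: I => [|q I IH] //= /andP[/andP[/andP[h0 h1] h2] hI].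
rewrite /Ou /= => /orP[hx|hx].
  by have [Dx hT] := Hin l0 h0 h1 h2 hx; split => //; rewrite hT.
by have [Dx hT] := IH hI hx; split => //; rewrite hT orbT.
Qed.

Lemma Good_step l S t : (0 < l)%N -> Good S t -> Good (piece S l) (t * pl l).
Proof.
move=> l0 [I [k1 d1 O1 C1 e1]]; exists (mapI l I); split.
- elim: I k1 {d1 O1 C1 e1} => [|q I IH] //= /andP[/andP[/andP[h0 h1] h2] hI].
  have [? ? ? _] := Hcd l0 h0 h1 h2.
  by rewrite IH // andbT; apply/andP; split => //; apply/andP.
- elim: I k1 d1 {O1 C1 e1} => [|q I IH] //= /andP[/andP[/andP[h0 h1] h2] hI] [hd dI].
  split; last exact: IH.
  move=> x hx /(OuMap l0 hI) [_ hT].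
  by have [_ /hd] := Hin l0 h0 h1 h2 hx.
- move=> x hx; have [Dx hT] := OuMap l0 k1 hx.
  by split; [exact: HDu Dx|split => //; exact: O1].
- move=> x [ux [Dx /C1]]; elim: I k1 {d1 O1 C1 e1} => [|q I IH] //= /andP[/andP[/andP[h0 h1] h2] hI].
  rewrite /Cu /= => /orP[hx|hx].
    by rewrite (Hout l0 h0 h1 h2 Dx hx).
  by rewrite (IH hI hx) orbT.
- rewrite -e1 /len big_map big_distrl /=.
  elim: I k1 {d1 O1 C1 e1} => [|q I IH]; first by rewrite !big_nil.
  move=> /= /andP[/andP[/andP[h0 h1] h2] hI].
  have [_ _ _ e] := Hcd l0 h0 h1 h2.
  by rewrite !big_cons /= e IH.
Qed.

Hypothesis Huniq : forall l l' x, (0 < l)%N -> (0 < l')%N -> D l x -> D l' x -> l = l'.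

Lemma cyl_cons l s x : (0 < l)%N ->
  cylinder T D (l :: s) x <-> piece (cylinder T D s) l x.
Proof.
move=> l0; split.
  move=> [ux h]; have Dx : D l x by exact: (h 0%N).
  split => //; split => //; split; first exact: HTu Dx.
  by move=> i hi; rewrite -iterSr; apply: (h i.+1).
move=> [ux [Dx [_ h]]]; split => // -[|i] //= hi.
by rewrite -[T (iter i T x)]iterS iterSr; apply: h.
Qed.

Definition M n : set R := if n == 0%N then @unitI R else sumlevel T D n.

Lemma level_decomp n : (0 < n)%N -> sumlevel T D n =
  [set x | exists l, (0 < l <= n)%N /\ piece (M (n - l)%N) l x].
Proof.
move=> n0; apply/seteqP; split => x.
  move=> [[|l s] []] //= _ /andP[l0 ps] sn cx.
  have := (cyl_cons s x l0).1 cx => -[ux [Dx cT]].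
  exists l; split; first by rewrite l0 -sn leq_addr.
  split => //; split => //; rewrite /M.
  clear cx; case: s ps sn cT => [|l' s'] ps sn cT.
    by rewrite /= addn0 in sn; rewrite sn subnn /=; exact: HTu Dx.
  move: ps => /= /andP[l'0 ps].
  have -> : (n - l == 0)%N = false by rewrite -sn /= addKn; apply/negbTE; rewrite -lt0n; lia.
  by exists (l' :: s'); split => //=; [rewrite l'0|rewrite -sn addKn].
move=> [l [/andP[l0 ln] [ux [Dx hM]]]].
move: hM; rewrite /M; case: eqP => e.
  move=> uT; exists [:: l]; split => //=; first by rewrite l0.
    by rewrite addn0; apply/eqP; rewrite eqn_leq ln -subn_eq0 e.
  by apply/(cyl_cons [::] x l0); split => //; split => //; split.
move=> [s [s0 ps sn cT]]; exists (l :: s); split => //=.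
- by rewrite l0.
- by rewrite sn subnKC.
- by apply/(cyl_cons s x l0).
Qed.

Lemma Good_M n : Good (M n) (u n).
Proof.
elim/ltn_ind: n => -[|n] IH.
  exists [:: (0, 1)]; split => //=.
  - by rewrite ler01 !lexx.
  - by move=> x; rewrite /Ou /= orbF => /andP[h1 h2]; rewrite /M /unitI /= !ltW.
  - by move=> x; rewrite /M /unitI /Cu /= orbF.
  - by rewrite /len big_cons big_nil subr0 addr0.
rewrite /M /= level_decomp // uE //.
set U := fun k => [set x | exists l, (0 < l <= k)%N /\ piece (M (n.+1 - l)%N) l x].
suff : forall k, (k <= n.+1)%N -> Good (U k) (\sum_(1 <= l < k.+1) pl l * u (n.+1 - l)).
  by apply.
elim => [|k IHk] hk.
  rewrite big_geq //; exists [::]; split => //.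
  - by move=> x [l [/andP[l0 l1]]]; exfalso; lia.
  - by rewrite /len big_nil.
have -> : U k.+1 = U k `|` piece (M (n.+1 - k.+1)%N) k.+1.
  apply/seteqP; split => x.
    move=> [l [/andP[l0]]]; rewrite leq_eqVlt => /orP[/eqP ->|lk] hp; first by right.
    by left; exists l; rewrite l0.
  case=> [[l [/andP[l0 lk] hp]]|hp]; first by exists l; rewrite l0 (leq_trans lk).
  by exists k.+1; rewrite ltn0Sn leqnn.
rewrite big_nat_recr //= mulrC.
apply: Good_union; first exact: IHk (ltnW hk).
  by apply: Good_step => //; apply: IH; lia.
move=> x [l [/andP[l0 lk] [_ [Dl _]]]] [_ [Dk _]].
by have := Huniq l0 (ltn0Sn k) Dl Dk => e; move: lk; rewrite e ltnn.
Qed.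
End Step.

Section Alt.
Variable R : realType.

Lemma harmA_iff (l : nat) (x : R) : (0 < l)%N ->
  harmA l x <-> 1 < x * (l%:R + 1) /\ x * l%:R <= 1.
Proof.
move=> l0; have L0 : 0 < l%:R :> R by rewrite ltr0n.
have L1 : 0 < l.+1%:R :> R by rewrite ltr0n.
rewrite /harmA /=.
rewrite -[(l.+1%:R)^-1]div1r.
rewrite -[(l%:R)^-1]div1r.
rewrite ltr_pdivrMr // ler_pdivlMr // -natr1.
by split => /andP.
Qed.

Lemma LaltE (l : nat) (x : R) : (0 < l)%N -> harmA l x ->
  Lalt x = - (l%:R * (l%:R + 1)) * x + (l%:R + 1).
Proof.
move=> l0 /(harmA_iff _ l0) [h1 h2].
have L1 : 1 <= l%:R :> R by rewrite ler1n.
have x0 : 0 < x.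
  have : 0 < x * (l%:R + 1) by lra.
  by rewrite pmulr_lgt0 //; lra.
rewrite /Lalt gt_eqF //=.
have -> : Num.floor (x^-1) = l%:Z.
  apply: floor_def; rewrite -[(l%:Z)%:~R]/(l%:R : R).
  rewrite -div1r ler_pdivlMr // ltr_pdivrMr // mulrC h2 /=.
  rewrite intrD /= mulrC; exact: h1.
done.
Qed.

Definition cA (l : nat) (a b : R) : R := (l%:R + 1 - b) / (l%:R * (l%:R + 1)).
Definition dA (l : nat) (a b : R) : R := (l%:R + 1 - a) / (l%:R * (l%:R + 1)).

Lemma plE (l : nat) : pl l = (l%:R * (l%:R + 1))^-1 :> R.
Proof. by rewrite /pl -natr1. Qed.

Lemma HcdA l a b : (0 < l)%N -> 0 <= a -> a <= b -> b <= 1 ->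
  [/\ 0 <= cA l a b, cA l a b <= dA l a b, dA l a b <= 1 &
      dA l a b - cA l a b = (b - a) * pl l].
Proof.
move=> l0 a0 ab b1.
have L1 : 1 <= l%:R :> R by rewrite ler1n.
have K0 : 0 < l%:R * (l%:R + 1) :> R by apply: mulr_gt0; lra.
have KL : l%:R + 1 <= l%:R * (l%:R + 1) :> R.
  have : 0 <= (l%:R - 1) * (l%:R + 1) :> R by apply: mulr_ge0; lra.
  by rewrite mulrBl mul1r subr_ge0.
rewrite /cA /dA; split.
- by apply: divr_ge0 => //; lra.
- by rewrite ler_pM2r ?invr_gt0 //; lra.
- by rewrite ler_pdivrMr // mul1r; lra.
- by rewrite -mulrBl plE; congr (_ * _); ring.
Qed.

Lemma HinA l a b x : (0 < l)%N -> 0 <= a -> a <= b -> b <= 1 ->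
  cA l a b < x < dA l a b -> harmA l x /\ a < Lalt x < b.
Proof.
move=> l0 a0 ab b1; have L1 : 1 <= l%:R :> R by rewrite ler1n.
have K0 : 0 < l%:R * (l%:R + 1) :> R by apply: mulr_gt0; lra.
rewrite /cA /dA ltr_pdivrMr // ltr_pdivlMr // => /andP[h1 h2].
have hA : harmA l x.
  apply/(harmA_iff _ l0); split.
    rewrite -(ltr_pM2l (_ : 0 < l%:R :> R)) ?mulr1; last lra.
    by rewrite mulrCA mulrA; lra.
  rewrite -(ler_pM2r (_ : 0 < l%:R + 1 :> R)) ?mul1r; last lra.
  by rewrite -mulrA; lra.
split => //; rewrite (LaltE l0 hA).
by rewrite mulNr (mulrC _ x); lra.
Qed.

Lemma HoutA l a b x : (0 < l)%N -> 0 <= a -> a <= b -> b <= 1 ->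
  harmA l x -> a <= Lalt x <= b -> cA l a b <= x <= dA l a b.
Proof.
move=> l0 a0 ab b1 hA; have L1 : 1 <= l%:R :> R by rewrite ler1n.
have K0 : 0 < l%:R * (l%:R + 1) :> R by apply: mulr_gt0; lra.
rewrite (LaltE l0 hA) /cA /dA ler_pdivrMr // ler_pdivlMr // mulNr (mulrC _ x).
by move=> /andP[h1 h2]; apply/andP; split; lra.
Qed.

Lemma HDuA l (x : R) : (0 < l)%N -> harmA l x -> unitI x.
Proof.
move=> l0 hA; have := hA => /(harmA_iff _ l0) [h1 h2].
have L1 : 1 <= l%:R :> R by rewrite ler1n.
have x0 : 0 < x.
  have : 0 < x * (l%:R + 1) by lra.
  by rewrite pmulr_lgt0 //; lra.
rewrite /unitI /=; apply/andP; split; first lra.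
have : x <= x * l%:R by rewrite ler_pMr.
lra.
Qed.

Lemma HTuA l (x : R) : (0 < l)%N -> harmA l x -> unitI (Lalt x).
Proof.
move=> l0 hA; rewrite /unitI /= (LaltE l0 hA).
have L1 : 1 <= l%:R :> R by rewrite ler1n.
move: hA => /(harmA_iff _ l0) [h1 h2].
have p1 : x * l%:R * (l%:R + 1) <= 1 * (l%:R + 1) by rewrite ler_pM2r //; lra.
have p2 : 1 * l%:R < x * (l%:R + 1) * l%:R by rewrite ltr_pM2r //; lra.
by apply/andP; split; lra.
Qed.

Lemma HuniqA l l' (x : R) : (0 < l)%N -> (0 < l')%N -> harmA l x -> harmA l' x -> l = l'.
Proof.
wlog: l l' / (l <= l')%N.
  move=> H l0 l'0 h h'; case: (leqP l l') => hl; first exact: H.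
  by apply/esym/H => //; apply: ltnW.
move=> ll l0 l'0 /(harmA_iff _ l0) [h1 h2] /(harmA_iff _ l'0) [h1' h2'].
apply/eqP; rewrite eqn_leq ll /=; rewrite leqNgt; apply/negP => lt.
have : l%:R + 1 <= l'%:R :> R by rewrite natr1 ler_nat.
have x0 : 0 < x.
  have : 0 < x * (l%:R + 1) by lra.
  by rewrite pmulr_lgt0 //; lra.
move=> hl; have : x * (l%:R + 1) <= x * l'%:R by rewrite ler_pM2l.
lra.
Qed.
End Alt.

Section Cl.
Variable R : realType.

Lemma lurB1 (x : R) : lurB 1 x <-> 1 <= x * 2 /\ x <= 1.
Proof.
rewrite /lurB /=; have h2 : 0 < 2 :> R by [].
rewrite -[2^-1]div1r ler_pdivrMr //.
by split => /andP.
Qed.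

Lemma lurBn (l : nat) (x : R) : (1 < l)%N ->
  lurB l x <-> 1 <= x * (l%:R + 1) /\ x * l%:R < 1.
Proof.
move=> l1; have L0 : 0 < l%:R :> R by rewrite ltr0n; lia.
have L1 : 0 < l.+1%:R :> R by rewrite ltr0n.
rewrite /lurB; have -> : (l == 1%N) = false by apply/negbTE; rewrite neq_ltn l1 orbT.
rewrite /= -[(l.+1%:R)^-1]div1r -[(l%:R)^-1]div1r.
rewrite ler_pdivrMr // ltr_pdivlMr // -natr1.
by split => /andP.
Qed.

Lemma lurB_w (l : nat) (x : R) : (0 < l)%N -> lurB l x ->
  1 <= x * (l%:R + 1) /\ x * l%:R <= 1.
Proof.
case: l => // -[|l] _.
  by move/lurB1 => [h1 h2]; rewrite mulr1; split => //; rewrite (_ : 1%:R + 1 = 2 :> R).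
move/lurBn => -[//|h1 h2]; split => //; exact: ltW.
Qed.

Lemma LclE (l : nat) (x : R) : (0 < l)%N -> lurB l x ->
  Lcl x = l%:R * (l%:R + 1) * x - l%:R.
Proof.
move=> l0 hB; have [h1 h2] := lurB_w l0 hB.
have L1 : 1 <= l%:R :> R by rewrite ler1n.
have x0 : 0 < x.
  have : 0 < x * (l%:R + 1) by lra.
  by rewrite pmulr_lgt0 //; lra.
rewrite /Lcl gt_eqF //=.
case: l l0 hB h1 h2 L1 => // -[|l] _ hB h1 h2 L1.
  move: hB => /lurB1 [h3 h4].
  have -> : 2^-1 <= x by rewrite -[2^-1]div1r ler_pdivrMr.
  by rewrite (_ : 1%:R + 1 = 2 :> R) //; ring.
move: hB => /lurBn -[//|h3 h4].
have L2 : 2 <= l.+2%:R :> R by rewrite ler_nat.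
have -> : (2^-1 <= x) = false.
  apply/negbTE; rewrite -ltNge -[2^-1]div1r ltr_pdivlMr //.
  have : x * 2 <= x * l.+2%:R by rewrite ler_pM2l.
  lra.
have -> : Num.ceil (x^-1) = (l.+3)%:Z.
  apply: ceil_def; rewrite -[(l.+3)%:Z%:~R]/(l.+3%:R : R).
  have -> : ((l.+3)%:Z - 1) = (l.+2)%:Z by rewrite -addn1 PoszD addrK.
  rewrite -[(l.+2)%:Z%:~R]/(l.+2%:R : R).
  rewrite -div1r ltr_pdivlMr // ler_pdivrMr // mulrC h4 /= -natr1 mulrC; exact: h3.
have -> : ((l.+3)%:Z - 1) = (l.+2)%:Z by rewrite -addn1 PoszD addrK.
done.
Qed.

Definition cC (l : nat) (a b : R) : R := (l%:R + a) / (l%:R * (l%:R + 1)).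
Definition dC (l : nat) (a b : R) : R := (l%:R + b) / (l%:R * (l%:R + 1)).

Lemma HcdC l a b : (0 < l)%N -> 0 <= a -> a <= b -> b <= 1 ->
  [/\ 0 <= cC l a b, cC l a b <= dC l a b, dC l a b <= 1 &
      dC l a b - cC l a b = (b - a) * pl l].
Proof.
move=> l0 a0 ab b1.
have L1 : 1 <= l%:R :> R by rewrite ler1n.
have K0 : 0 < l%:R * (l%:R + 1) :> R by apply: mulr_gt0; lra.
have KL : l%:R + 1 <= l%:R * (l%:R + 1) :> R.
  have : 0 <= (l%:R - 1) * (l%:R + 1) :> R by apply: mulr_ge0; lra.
  by rewrite mulrBl mul1r subr_ge0.
rewrite /cC /dC; split.
- by apply: divr_ge0 => //; lra.
- by rewrite ler_pM2r ?invr_gt0 //; lra.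
- by rewrite ler_pdivrMr // mul1r; lra.
- by rewrite -mulrBl /pl -natr1; congr (_ * _); ring.
Qed.

Lemma HinC l a b x : (0 < l)%N -> 0 <= a -> a <= b -> b <= 1 ->
  cC l a b < x < dC l a b -> lurB l x /\ a < Lcl x < b.
Proof.
move=> l0 a0 ab b1; have L1 : 1 <= l%:R :> R by rewrite ler1n.
have K0 : 0 < l%:R * (l%:R + 1) :> R by apply: mulr_gt0; lra.
rewrite /cC /dC ltr_pdivrMr // ltr_pdivlMr // => /andP[h1 h2].
have hB : lurB l x.
  case: l l0 L1 K0 h1 h2 => // -[|l] _ L1 K0 h1 h2.
    have e2 : 1%:R * (1%:R + 1) = 2 :> R by rewrite mul1r.
    apply/lurB1; rewrite e2 in h1 h2.
    split; lra.
  apply/(@lurBn l.+2 x isT); split.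
    rewrite -(ler_pM2l (_ : 0 < l.+2%:R :> R)) ?mulr1; last by rewrite ltr0n.
    by rewrite mulrCA mulrA; lra.
  rewrite -(ltr_pM2r (_ : 0 < l.+2%:R + 1 :> R)) ?mul1r; last lra.
  by rewrite -mulrA; lra.
split => //; rewrite (LclE l0 hB).
by rewrite (mulrC _ x); lra.
Qed.

Lemma HoutC l a b x : (0 < l)%N -> 0 <= a -> a <= b -> b <= 1 ->
  lurB l x -> a <= Lcl x <= b -> cC l a b <= x <= dC l a b.
Proof.
move=> l0 a0 ab b1 hB; have L1 : 1 <= l%:R :> R by rewrite ler1n.
have K0 : 0 < l%:R * (l%:R + 1) :> R by apply: mulr_gt0; lra.
rewrite (LclE l0 hB) /cC /dC ler_pdivrMr // ler_pdivlMr // (mulrC _ x).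
by move=> /andP[h1 h2]; apply/andP; split; lra.
Qed.

Lemma HDuC l (x : R) : (0 < l)%N -> lurB l x -> unitI x.
Proof.
move=> l0 hB; have [h1 h2] := lurB_w l0 hB.
have L1 : 1 <= l%:R :> R by rewrite ler1n.
have x0 : 0 < x.
  have : 0 < x * (l%:R + 1) by lra.
  by rewrite pmulr_lgt0 //; lra.
rewrite /unitI /=; apply/andP; split; first lra.
have : x <= x * l%:R by rewrite ler_pMr.
lra.
Qed.

Lemma HTuC l (x : R) : (0 < l)%N -> lurB l x -> unitI (Lcl x).
Proof.
move=> l0 hB; rewrite /unitI /= (LclE l0 hB).
have L1 : 1 <= l%:R :> R by rewrite ler1n.
have [h1 h2] := lurB_w l0 hB.
have p1 : x * l%:R * (l%:R + 1) <= 1 * (l%:R + 1) by rewrite ler_pM2r //; lra.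
have p2 : 1 * l%:R <= x * (l%:R + 1) * l%:R by rewrite ler_pM2r //; lra.
by apply/andP; split; lra.
Qed.

Lemma HuniqC l l' (x : R) : (0 < l)%N -> (0 < l')%N -> lurB l x -> lurB l' x -> l = l'.
Proof.
wlog: l l' / (l <= l')%N.
  move=> H l0 l'0 h h'; case: (leqP l l') => hl; first exact: H.
  by apply/esym/H => //; apply: ltnW.
move=> ll l0 l'0 hB hB'.
apply/eqP; rewrite eqn_leq ll /=; rewrite leqNgt; apply/negP => lt.
have [h1 h2] := lurB_w l0 hB.
have [_ h2'] := (lurBn x (leq_ltn_trans l0 lt)).1 hB'.
have : l%:R + 1 <= l'%:R :> R by rewrite natr1 ler_nat.
have L1 : 1 <= l%:R :> R by rewrite ler1n.
have x0 : 0 < x.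
  have : 0 < x * (l%:R + 1) by lra.
  by rewrite pmulr_lgt0 //; lra.
move=> hl; have : x * (l%:R + 1) <= x * l'%:R by rewrite ler_pM2l.
lra.
Qed.
End Cl.
Section Meas.
Variable R : realType.

Lemma level0 (T : R -> R) (D : nat -> set R) : sumlevel T D 0 = set0.
Proof.
apply/seteqP; split => x // [s [s0 ps sn _]].
case: s s0 ps sn => // l s _ /= /andP[l0 _] /eqP; rewrite addn_eq0 => /andP[/eqP e _].
by rewrite e in l0.
Qed.

Lemma lam_alt n : (0 < n)%N -> lebesgue_measure (@Lalt_level R n) = (u n)%:E.
Proof.
move=> n0; rewrite -(Good_measure (Good_M (@HDuA R) (@HTuA R) (@HcdA R) (@HinA R)
  (@HoutA R) (@HuniqA R) n)).
by rewrite /M gtn_eqF.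
Qed.

Lemma lam_cl n : (0 < n)%N -> lebesgue_measure (@Lcl_level R n) = (u n)%:E.
Proof.
move=> n0; rewrite -(Good_measure (Good_M (@HDuC R) (@HTuC R) (@HcdC R) (@HinC R)
  (@HoutC R) (@HuniqC R) n)).
by rewrite /M gtn_eqF.
Qed.

Lemma lam_eq n : lebesgue_measure (@Lcl_level R n) = lebesgue_measure (@Lalt_level R n).
Proof.
case: n => [|n]; last by rewrite lam_alt // lam_cl.
by rewrite /Lcl_level /Lalt_level !level0.
Qed.
End Meas.

Section U.
Variable R : realType.
Local Notation u := (@u R).
Definition aa (l : nat) : R := (l.+1%:R)^-1.

Lemma pl_ge0 l : 0 <= pl l :> R.
Proof. by rewrite /pl invr_ge0 mulr_ge0. Qed.

Lemma u_ge0 n : 0 <= u n.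
Proof.
elim/ltn_ind: n => -[|n] IH; first by rewrite u0.
rewrite uE // big_nat_cond; apply: sumr_ge0 => l /andP[/andP[l1 l2] _].
by apply: mulr_ge0; [exact: pl_ge0|apply: IH; lia].
Qed.

Lemma pl_a l : pl l.+1 + aa l.+1 = aa l.
Proof.
rewrite /pl /aa -!natr1 -[(l%:R + 1 + 1)]addrA.
have h0 : l%:R + 1 != 0 :> R by rewrite natr1 pnatr_eq0.
have h1 : l%:R + (1 + 1) != 0 :> R by rewrite addrA !natr1 pnatr_eq0.
by field; apply/andP.
Qed.

Lemma Vsum n : \sum_(0 <= l < n.+1) aa l * u (n - l)%N = 1.
Proof.
elim: n => [|n IH]; first by rewrite big_nat1 u0 /aa mulr1 invr1.
rewrite big_nat_recl // subn0 uE // big_add1 /= /aa invr1 mul1r -/aa.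
rewrite -big_split /= -[RHS]IH; apply: eq_big_nat => l /andP[_ hl].
by rewrite subSS -mulrDl -pl_a.
Qed.

Lemma Wsum n : \sum_(0 <= k < n.+1) aa (n - k)%N * u k = 1.
Proof.
rewrite -[RHS](Vsum n) big_nat_rev /=; apply: eq_big_nat => l /andP[_ hl].
by rewrite add0n subSS subKn // -ltnS.
Qed.

Definition cc (n : nat) : R := if n is n'.+1 then u n - u n' else 1.

Lemma Esum m : \sum_(0 <= k < m.+2) aa (m.+1 - k)%N * cc k = 0.
Proof.
rewrite big_nat_recl //= mulr1.
have h1 := Wsum m.+1; rewrite big_nat_recl //= u0 mulr1 in h1.
have h2 := Wsum m.
rewrite (eq_big_nat _ _ (F2 := fun k => aa (m.+1 - k.+1)%N * u k.+1 - aa (m - k)%N * u k)); last first.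
  by move=> k /andP[_ hk]; rewrite mulrBr subSS.
rewrite sumrB addrA.
have -> : \sum_(0 <= i < m.+1) aa (m.+1 - i.+1)%N * u i.+1 =
          \sum_(0 <= i < m.+1) aa (m.+1 - i.+1) * u i.+1 by [].
by rewrite h1 h2 subrr.
Qed.

Lemma bracket (N j : nat) : (j <= N)%N ->
  aa j.+1 - (N.+1%:R / N.+2%:R) * aa j = (j%:R - N%:R) / ((j%:R + 1) * (j%:R + 2) * (N%:R + 2)).
Proof.
move=> _; rewrite /aa -!natr1 -!addrA.
have h0 : j%:R + 1 != 0 :> R by rewrite natr1 pnatr_eq0.
have h1 : j%:R + (1 + 1) != 0 :> R by rewrite addrA !natr1 pnatr_eq0.
have h2 : N%:R + (1 + 1) != 0 :> R by rewrite addrA !natr1 pnatr_eq0.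
field; rewrite h0 h1 h2 //.
Qed.

Lemma cc_le0 n : (0 < n)%N -> cc n <= 0.
Proof.
elim/ltn_ind: n => -[|[|m]] IH // _.
  rewrite /= u0 uE // big_nat1 u0 mulr1 /pl subr_le0.
  by rewrite invf_le1 // mul1r ler1n.
set N := m.+1.
have E1 := Esum N; have E0 := Esum m.
rewrite big_nat_recr //= subnn in E1.
have -> : cc N.+1 = - \sum_(0 <= k < N.+1) (aa (N.+1 - k)%N - (N.+1%:R / N.+2%:R) * aa (N - k)%N) * cc k.
  rewrite (eq_big_nat _ _ (F2 := fun k => aa (N.+1 - k)%N * cc k - (N.+1%:R / N.+2%:R) * (aa (N - k)%N * cc k))); last first.
    by move=> k _; rewrite mulrBl mulrA.
  rewrite sumrB -mulr_sumr E0 mulr0 subr0.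
  have e : aa 0 = 1 by rewrite /aa invr1.
  by rewrite e mul1r in E1; move/eqP: E1; rewrite addrC addr_eq0 => /eqP.
rewrite oppr_le0 big_nat_cond; apply: sumr_ge0 => k /andP[/andP[_ hk] _].
have hkN : (k <= N)%N by rewrite -ltnS.
rewrite subSn // bracket; last by rewrite leq_subr.
case: k hk hkN => [|k] hk hkN.
  by rewrite subn0 subrr mul0r mul0r.
apply: mulr_le0; last exact: IH.
apply: mulr_le0_ge0; last by rewrite invr_ge0 mulr_ge0 // ?mulr_ge0 // addr_ge0.
by rewrite subr_le0 ler_nat leq_subr.
Qed.

Lemma u_dec n : u n.+1 <= u n.
Proof. by have := cc_le0 (ltn0Sn n); rewrite /= subr_le0. Qed.

Lemma u_anti m n : (m <= n)%N -> u n <= u m.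
Proof.
elim: n => [|n IH]; first by rewrite leqn0 => /eqP ->.
rewrite leq_eqVlt => /orP[/eqP ->//|]; rewrite ltnS => /IH.
exact: le_trans (u_dec n).
Qed.

Local Notation H := (harm R).

Lemma HS n : H n.+1 = H n + (n.+1%:R)^-1.
Proof. by rewrite /harm big_nat_recr. Qed.

Lemma H0 : H 0 = 0. Proof. by rewrite /harm big_geq. Qed.

Lemma H_a n : \sum_(0 <= l < n) aa l = H n.
Proof. by rewrite /harm big_add1. Qed.

Lemma H_mono m n : (m <= n)%N -> H m <= H n.
Proof.
elim: n => [|n IH]; first by rewrite leqn0 => /eqP ->.
rewrite leq_eqVlt => /orP[/eqP ->//|]; rewrite ltnS => /IH h.
by rewrite HS (le_trans h) // lerDl invr_ge0.
Qed.

Lemma H_ge1 n : (0 < n)%N -> 1 <= H n.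
Proof.
move=> n0; apply: le_trans (H_mono n0).
by rewrite HS H0 add0r invr1.
Qed.

Lemma H_gt0 n : (0 < n)%N -> 0 < H n.
Proof. by move=> n0; apply: lt_le_trans (H_ge1 n0). Qed.

Lemma a_anti m n : (m <= n)%N -> aa n <= aa m.
Proof.
move=> mn; rewrite /aa lef_pV2 ?posrE ?ltr0n // ler_nat; lia.
Qed.

Lemma a_gt0 n : 0 < aa n. Proof. by rewrite /aa invr_gt0 ltr0n. Qed.

Lemma U5 n : u n * H n.+1 <= 1.
Proof.
rewrite -(Vsum n) -H_a mulr_sumr; apply: ler_sum_nat => l /andP[_ hl].
rewrite mulrC ler_pM2l ?a_gt0 //.
by apply: u_anti; rewrite leq_subr.
Qed.

Lemma u_le_invH n : u n <= (H n.+1)^-1.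
Proof.
have h := H_gt0 (ltn0Sn n).
by rewrite -(ler_pM2r h) mulVf ?gt_eqF // U5.
Qed.

Lemma U6 N : 1 <= u N * H N + aa N * \sum_(0 <= k < N.+1) (H k.+1)^-1.
Proof.
rewrite -[X in X <= _](Wsum (N + N)) (big_cat_nat _ (n := N.+1)) //; last by lia.
rewrite addrC; apply: lerD.
  rewrite mulr_sumr; apply: ler_sum_nat => k /andP[_ hk].
  apply: ler_pM; [exact: ltW (a_gt0 _)|exact: u_ge0|apply: a_anti; lia|exact: u_le_invH].
apply: (@le_trans _ _ (\sum_(N.+1 <= k < (N + N).+1) aa (N + N - k)%N * u N)).
  apply: ler_sum_nat => k /andP[hk _]; rewrite ler_pM2l ?a_gt0 //.
  by apply: u_anti; apply: ltnW.
rewrite -mulr_suml mulrC.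
suff -> : \sum_(N.+1 <= k < (N + N).+1) aa (N + N - k)%N = H N by [].
rewrite -H_a -{1}(add0n N.+1) big_addn big_nat_rev /=.
have -> : ((N + N).+1 - N.+1 = N)%N by lia.
apply: eq_big_nat => i /andP[_ hi]; congr aa; lia.
Qed.
End U.

Section F.
Variable R : realType.
Local Notation H := (harm R).
Local Notation u := (@u R).
Local Notation a := (@aa R).

Lemma ln_step (y : R) : 1 <= y -> ln (y + 1) <= ln y + y^-1.
Proof.
move=> y1; have y0 : 0 < y by lra.
have -> : y + 1 = y * (1 + y^-1) by rewrite mulrDr mulr1 mulfV ?gt_eqF.
rewrite lnM ?posrE //; last by rewrite addr_gt0 // invr_gt0.
have : 0 < y^-1 by rewrite invr_gt0.
by move=> h; rewrite lerD2l le_ln1Dx //; lra.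
Qed.

Lemma ln_step2 (y : R) : 1 <= y -> ln y + (y + 1)^-1 <= ln (y + 1).
Proof.
move=> y1; have y0 : 0 < y by lra.
have y10 : 0 < y + 1 by lra.
have hi : (y + 1)^-1 < 1 by rewrite invf_lt1 //; lra.
have e : ln y = ln (y + 1) + ln (1 - (y + 1)^-1).
  rewrite -lnM ?posrE //; last by rewrite subr_gt0.
  by congr ln; rewrite mulrBr mulr1 mulfV ?gt_eqF // addrK.
have : ln (1 - (y + 1)^-1) <= - (y + 1)^-1.
  by apply: le_ln1Dx; lra.
lra.
Qed.

Lemma lnH1 n : ln (n.+1%:R) <= H n :> R.
Proof.
elim: n => [|n IH]; first by rewrite ln1 H0.
rewrite HS -natr1; apply: le_trans (ln_step _) _; first by rewrite ler1n.
by rewrite lerD2r.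
Qed.

Lemma lnH2 n : (0 < n)%N -> H n <= 1 + ln (n%:R) :> R.
Proof.
case: n => // n _; elim: n => [|n IH].
  by rewrite ln1 HS H0 add0r invr1 addr0.
rewrite HS; apply: le_trans (lerD IH (lexx _)) _.
rewrite -addrA lerD2l -[n.+2%:R]natr1.
by apply: ln_step2; rewrite ler1n.
Qed.

Lemma H_div (M : R) : exists N, forall n, (N <= n)%N -> M <= H n.
Proof.
exists (Num.trunc (expR M)) => n hn.
apply: le_trans (lnH1 n).
have h1 : expR M < n.+1%:R.
  apply: lt_le_trans (truncnS_gt _) _; by rewrite ler_nat ltnS.
rewrite -{1}(expRK M) ler_ln ?posrE ?expR_gt0 //; first exact: ltW.
Qed.

Lemma cvg_eps (x : nat -> R) (l : R) :
  (forall e, 0 < e -> exists N, forall n, (N <= n)%N -> l - e <= x n <= l + e) ->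
  x @ \oo --> l.
Proof.
move=> h; apply/cvgrPdist_le => e e0.
have [N hN] := h e e0.
by exists N => // n /= hn; rewrite ler_distlC; exact: hN.
Qed.

Lemma split_sum (f : nat -> R) (M : nat) (d : R) n : 0 <= d ->
  (forall k, f k <= 1) -> (forall k, (M <= k)%N -> f k <= d) ->
  \sum_(0 <= k < n) f k <= M%:R + n%:R * d.
Proof.
move=> d0 h1 h2.
suff : \sum_(0 <= k < n) f k <= (minn n M)%:R + n%:R * d.
  move/le_trans; apply; rewrite lerD2r ler_nat; exact: geq_minr.
elim: n => [|n IH]; first by rewrite big_geq // mul0r addr0.
rewrite big_nat_recr //=; case: (ltnP n M) => hn.
  have -> : minn n.+1 M = (minn n M).+1 by rewrite !minnE; lia.
  rewrite -natr1 -[n.+1%:R]natr1 mulrDl mul1r.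
  have := h1 n; have : 0 <= d by []; lra.
have -> : minn n.+1 M = minn n M by rewrite !minnE; lia.
rewrite -[n.+1%:R]natr1 mulrDl mul1r.
have := h2 n hn; lra.
Qed.

Lemma invH_le (y : R) k : 0 < y -> y <= H k -> (H k)^-1 <= y^-1.
Proof.
move=> y0 yH; have H0' : 0 < H k by apply: lt_le_trans yH.
by rewrite lef_pV2 ?posrE.
Qed.

Lemma exN (y : R) : exists N : nat, forall n, (N <= n)%N -> y <= n%:R.
Proof.
exists (Num.trunc y).+1 => n hn; apply: le_trans (ltW (truncnS_gt y)) _.
by rewrite ler_nat.
Qed.

Lemma L2 : (fun n => ln (n%:R : R) / H n) @ \oo --> (1 : R).
Proof.
apply: cvg_eps => e e0.
have [N hN] := H_div (e^-1 + 1).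
exists (maxn N 1) => n; rewrite geq_max => /andP[nN n1].
have h := hN n nN; have Hge1 := @H_ge1 R n n1; have Hp := @H_gt0 R n n1.
have l1 := lnH2 n1.
have l2 : ln (n%:R) <= H n.
  apply: le_trans (lnH1 n); rewrite ler_ln ?posrE ?ltr0n // ler_nat //.
have eH : 1 <= e * H n.
  have : e * e^-1 <= e * (H n) by rewrite ler_pM2l //; lra.
  by rewrite mulfV ?gt_eqF.
apply/andP; split.
  rewrite ler_pdivlMr // mulrBl mul1r; lra.
rewrite ler_pdivrMr //; lra.
Qed.

Lemma e_small e : 0 < e -> exists N, forall n, (N <= n)%N ->
  a n * \sum_(0 <= k < n.+1) (H k.+1)^-1 <= e.
Proof.
move=> e0; have e20 : 0 < e / 2 by rewrite divr_gt0.
have [M hM] := H_div (e / 2)^-1.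
have [N hN] := exN ((M%:R) / (e / 2)).
exists N => n hn.
have hs : \sum_(0 <= k < n.+1) (H k.+1)^-1 <= M%:R + n.+1%:R * (e / 2).
  apply: split_sum; first exact: ltW.
    by move=> k; rewrite invf_le1 ?(@H_gt0 R) ?(@H_ge1 R).
  move=> k hk; rewrite -[e / 2]invrK; apply: invH_le; first by rewrite invr_gt0.
  by apply: hM; apply: leqW.
have an0 : 0 < a n by exact: a_gt0.
have step1 : a n * \sum_(0 <= k < n.+1) (H k.+1)^-1 <=
    a n * (M%:R + n.+1%:R * (e / 2)) by rewrite ler_pM2l.
apply: le_trans step1 _.
have n10 : 0 < n.+1%:R :> R by rewrite ltr0n.
have hMn : M%:R <= n%:R * (e / 2).
  by rewrite -ler_pdivrMr //; apply: hN.
have an1 : a n * n.+1%:R = 1 by rewrite /aa mulVf ?gt_eqF.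
rewrite mulrDr [a n * (n.+1%:R * _)]mulrA an1 mul1r.
have : M%:R * a n <= e / 2.
  rewrite /aa ler_pdivrMr // -[n.+1%:R]natr1 mulrDr mulr1 [_ * n%:R]mulrC; apply: le_trans hMn _; by rewrite lerDl ltW.
move=> h; rewrite [a n * _]mulrC; lra.
Qed.

Lemma uH_le1 n : u n * H n <= 1.
Proof.
apply: le_trans (U5 R n); apply: ler_wpM2l; first exact: u_ge0.
by apply: H_mono.
Qed.

Lemma uH_ge e : 0 < e -> exists N, forall n, (N <= n)%N -> 1 - e <= u n * H n.
Proof.
move=> e0; have [N hN] := e_small e0; exists N => n hn.
have := U6 R n; have := hN n hn; lra.
Qed.

Lemma L1 : (fun n => u n * H n) @ \oo --> (1 : R).
Proof.
apply: cvg_eps => e e0; have [N hN] := uH_ge e0; exists N => n hn.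
apply/andP; split; first exact: hN.
by apply: le_trans (uH_le1 n) _; rewrite lerDl ltW.
Qed.

Lemma H_over_n d : 0 < d -> exists N, forall n, (N <= n)%N -> H n <= d * n%:R.
Proof.
move=> d0; have d20 : 0 < d / 2 by rewrite divr_gt0.
have [M hM] := exN (d / 2)^-1.
have [N hN] := exN (M%:R / (d / 2)).
exists N => n hn.
have hs : \sum_(0 <= k < n) a k <= M%:R + n%:R * (d / 2).
  apply: split_sum; first exact: ltW.
    by move=> k; rewrite invf_le1 ?ltr0n // ler1n.
  move=> k hk; rewrite /aa -[d / 2]invrK lef_pV2 ?posrE ?ltr0n ?invr_gt0 //.
  by apply: le_trans (hM k hk) _; rewrite ler_nat.
rewrite -(H_a R); apply: le_trans hs _.
have hMn : M%:R <= n%:R * (d / 2) by rewrite -ler_pdivrMr //; apply: hN.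
have -> : d * n%:R = n%:R * (d / 2) + n%:R * (d / 2).
  by rewrite -mulrDr -splitr mulrC.
by rewrite lerD2r.
Qed.

Lemma f_step k : (0 < k)%N ->
  (H k.+1)^-1 * (1 - (H k)^-1) <= k.+1%:R / H k.+1 - k%:R / H k.
Proof.
move=> k0; have h0 := @H_gt0 R k k0; have h1 := @H_gt0 R k.+1 (ltn0Sn k).
rewrite -subr_ge0.
have -> : k.+1%:R / H k.+1 - k%:R / H k - (H k.+1)^-1 * (1 - (H k)^-1) =
   (k.+1%:R)^-1 / (H k * H k.+1).
  rewrite HS -[k.+1%:R]natr1.
  have hk1 : k%:R + 1 != 0 :> R by rewrite natr1 pnatr_eq0.
  have hh : H k != 0 by rewrite gt_eqF.
  have hp : 0 < H k * (k%:R + 1) + 1.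
    by apply: addr_gt0 => //; apply: mulr_gt0 => //; rewrite natr1 ltr0n.
  by field; rewrite hk1 hh gt_eqF.
by rewrite divr_ge0 // ?invr_ge0 // mulr_ge0 // ltW.
Qed.

Lemma H_gt1 K : (1 < K)%N -> 1 < H K.
Proof.
move=> K1; apply: lt_le_trans (@H_mono R 2 K K1).
by rewrite !HS H0 add0r invr1 ltrDl invr_gt0.
Qed.

Lemma sum_invH_le K n : (1 < K)%N -> (K <= n)%N ->
  \sum_(1 <= k < n.+1) (H k)^-1 <= K%:R + (n%:R / H n) * (H K / (H K - 1)).
Proof.
move=> K1 Kn; have HK := H_gt1 K1.
have K0 : (0 < K)%N by apply: ltnW.
set q := 1 - (H K)^-1.
have q0 : 0 < q by rewrite /q subr_gt0 invf_lt1 //; apply: lt_trans HK.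
have qE : H K / (H K - 1) = q^-1.
  have h1 : H K != 0 by rewrite gt_eqF //; apply: lt_trans HK.
  have h2 : H K - 1 != 0 by rewrite subr_eq0 gt_eqF.
  by rewrite /q; field; rewrite h1 h2.
rewrite qE (big_cat_nat _ (n := K.+1)) //=.
apply: lerD.
  apply: le_trans (_ : \sum_(1 <= k < K.+1) (1 : R) <= _).
    apply: ler_sum_nat => k /andP[k1 _]; rewrite invf_le1 ?(@H_gt0 R) ?(@H_ge1 R) //.
  by rewrite sumr_const_nat subn1 /= -[1 *+ _]mulr_natl mulr1.
rewrite big_add1 /=.
have step : forall k, (K <= k < n)%N -> (H k.+1)^-1 <= (k.+1%:R / H k.+1 - k%:R / H k) / q.
  move=> k /andP[Kk _]; rewrite ler_pdivlMr //.
  apply: le_trans (f_step (leq_trans K0 Kk)).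
  apply: ler_wpM2l; first by rewrite invr_ge0 ltW // (@H_gt0 R).
  rewrite /q lerD2l lerN2.
  apply: invH_le; first exact: lt_trans HK.
  exact: H_mono.
apply: le_trans (ler_sum_nat step) _.
rewrite -mulr_suml (telescope_sumr (fun k => k%:R / H k) Kn).
rewrite ler_pM2r ?invr_gt0 // gerDl oppr_le0 divr_ge0 // ltW //.
exact: (@H_gt0 R).
Qed.

Lemma s_upper e : 0 < e -> exists N, forall n, (N <= n)%N ->
  (\sum_(1 <= k < n.+1) u k) * (H n / n%:R) <= 1 + e.
Proof.
move=> e0; have e20 : 0 < e / 2 by rewrite divr_gt0.
have [K0 hK0] := H_div (1 + (e / 2)^-1).
set K := maxn K0 2.
have K1 : (1 < K)%N by rewrite leq_max leqnn orbT.
have HK := hK0 K (leq_maxl _ _).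
have HK1 := H_gt1 K1.
have KR : 0 < K%:R :> R by rewrite ltr0n; apply: ltnW.
have [N1 hN1] := H_over_n (divr_gt0 e20 KR).
exists (maxn N1 K) => n; rewrite geq_max => /andP[nN1 nK].
have n1 : (0 < n)%N by apply: leq_trans nK; apply: ltnW.
have Hn0 := @H_gt0 R n n1.
have n0 : 0 < n%:R :> R by rewrite ltr0n.
have hs : \sum_(1 <= k < n.+1) u k <= \sum_(1 <= k < n.+1) (H k)^-1.
  apply: ler_sum_nat => k /andP[k1 _]; apply: le_trans (u_le_invH R k) _.
  by apply: invH_le; [exact: (@H_gt0 R)|exact: H_mono].
have hQ : H K / (H K - 1) <= 1 + e / 2.
  have h1 : 0 < H K - 1 by rewrite subr_gt0.
  rewrite ler_pdivrMr //.
  have : (e / 2) * (e / 2)^-1 <= (e / 2) * (H K - 1) by rewrite ler_pM2l //; lra.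
  rewrite mulfV ?gt_eqF //; lra.
have hHn := hN1 n nN1.
have hpos : 0 <= H n / n%:R by rewrite divr_ge0 // ltW.
apply: le_trans (ler_wpM2r hpos (le_trans hs (sum_invH_le K1 nK))) _.
rewrite mulrDl.
have -> : n%:R / H n * (H K / (H K - 1)) * (H n / n%:R) = H K / (H K - 1).
  have hn0 : n%:R != 0 :> R by rewrite gt_eqF.
  have hH0 : H n != 0 by rewrite gt_eqF.
  have hK : H K - 1 != 0 by rewrite subr_eq0 gt_eqF.
  by field; rewrite hn0 hH0 hK.
have : K%:R * (H n / n%:R) <= e / 2.
  rewrite mulrA ler_pdivrMr // mulrC -ler_pdivlMr //.
  by move: hHn; rewrite mulrAC.
move: hQ; lra.
Qed.

Lemma s_lower e : 0 < e -> exists N, forall n, (N <= n)%N ->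
  1 - e <= (\sum_(1 <= k < n.+1) u k) * (H n / n%:R).
Proof.
move=> e0; have e20 : 0 < e / 2 by rewrite divr_gt0.
case: (ltP e 1) => e1; last first.
  exists 0%N => n _; apply: le_trans (_ : 0 <= _); first by rewrite subr_le0.
  apply: mulr_ge0; first by apply: sumr_ge0 => i _; exact: u_ge0.
  apply: divr_ge0 => //; rewrite -(H0 R); exact: H_mono.
have [K0 hK0] := uH_ge e20.
set K := maxn K0 1.
have [N2 hN2] := exN (K%:R / (e / 2)).
exists (maxn N2 K) => n; rewrite geq_max => /andP[nN2 nK].
have K1 : (0 < K)%N by rewrite leq_max leqnn orbT.
have n1 : (0 < n)%N by apply: leq_trans nK.
have Hn0 := @H_gt0 R n n1.
have n0 : 0 < n%:R :> R by rewrite ltr0n.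
have hKn : K%:R <= n%:R * (e / 2) by rewrite -ler_pdivrMr //; apply: hN2.
have hs : (n.+1 - K)%:R * (1 - e / 2) <= (\sum_(1 <= k < n.+1) u k) * H n.
  rewrite (big_cat_nat _ (n := K)) //=; last by lia.
  apply: le_trans (_ : \sum_(K <= i < n.+1) u i * H n <= _).
    rewrite mulrC mulr_natr -sumr_const_nat; apply: ler_sum_nat => i /andP[Ki iN].
    apply: le_trans (hK0 i _) _; first by apply: leq_trans Ki; exact: leq_maxl.
    apply: ler_wpM2l; first exact: u_ge0.
    by apply: H_mono; rewrite -ltnS.
  rewrite mulrDl -mulr_suml lerDr; apply: mulr_ge0; last exact: ltW.
  by apply: sumr_ge0 => i _; exact: u_ge0.
have eqr : (\sum_(1 <= k < n.+1) u k) * (H n / n%:R) =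
    ((\sum_(1 <= k < n.+1) u k) * H n) / n%:R by rewrite mulrA.
rewrite eqr ler_pdivlMr //; apply: le_trans hs.
rewrite natrB; last by apply: leq_trans nK _.
rewrite -natr1.
have Kp : 0 <= K%:R * (e / 2) :> R by apply: mulr_ge0 => //; exact: ltW.
nra.
Qed.

Lemma L3 : (fun n => (\sum_(1 <= k < n.+1) u k) / (n%:R / H n)) @ \oo --> (1 : R).
Proof.
apply: cvg_eps => e e0.
have [N1 h1] := s_upper e0; have [N2 h2] := s_lower e0.
exists (maxn N1 N2) => n; rewrite geq_max => /andP[n1 n2].
by rewrite invf_div h2 ?h1.
Qed.
End F.

Theorem corollary5p2 (R : realType) :
  let lam := (@lebesgue_measure R) in
  (* (1) *)
  ((forall n : nat,
      (\sum_(1 <= k < n.+1) lam (@Lcl_level R k))%E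
      = (\sum_(1 <= k < n.+1) lam (@Lalt_level R k))%E) /\
   asym_equiv (fun n => \sum_(1 <= k < n.+1) fine (lam (@Lcl_level R k)))
              (fun n => n%:R / @harm R n) /\
   asym_equiv (fun n => n%:R / @harm R n) (fun n => n%:R / ln (n%:R : R)))
  /\
  (* (2) *)
  ((forall n : nat, lam (@Lcl_level R n) = lam (@Lalt_level R n)) /\
   asym_equiv (fun n => fine (lam (@Lcl_level R n))) (fun n => (@harm R n)^-1) /\
   asym_equiv (fun n => (@harm R n)^-1) (fun n => (ln (n%:R : R))^-1)).
Proof.
move=> lam.
have fineu : forall k, (0 < k)%N -> fine (lam (@Lcl_level R k)) = u k.
  by move=> k k0; rewrite /lam lam_cl.
have eL2 : (fun n => (n%:R / harm R n) / (n%:R / ln (n%:R : R))) =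
           (fun n => ln (n%:R : R) / harm R n).
  apply: funext => -[|n]; first by rewrite !mul0r (H0 R) invr0 mulr0.
  have n0 : n.+1%:R != 0 :> R by rewrite pnatr_eq0.
  rewrite invf_div.
  transitivity (ln (n.+1%:R : R) / harm R n.+1 * (n.+1%:R / n.+1%:R)); first by ring.
  by rewrite divff // mulr1.
split; split.
- by move=> n; apply: eq_bigr => k _; rewrite /lam lam_eq.
- split; last by rewrite /asym_equiv eL2; exact: L2.
  rewrite /asym_equiv.
  have -> : (fun n => (\sum_(1 <= k < n.+1) fine (lam (@Lcl_level R k))) / (n%:R / harm R n)) =
            (fun n => (\sum_(1 <= k < n.+1) u k) / (n%:R / harm R n)).
    apply: funext => n; congr (_ / _); apply: eq_big_nat => k /andP[k1 _].
    exact: fineu.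
  exact: L3.
- by move=> n; rewrite /lam lam_eq.
- split.
    rewrite /asym_equiv.
    have -> : (fun n => fine (lam (@Lcl_level R n)) / (harm R n)^-1) = (fun n => u n * harm R n).
      apply: funext => -[|n].
        by rewrite /lam /Lcl_level level0 measure0 /= mul0r /harm big_geq // mulr0.
      by rewrite fineu // invrK.
    exact: L1.
  rewrite /asym_equiv.
  have -> : (fun n => (harm R n)^-1 / (ln (n%:R : R))^-1) = (fun n => ln (n%:R : R) / harm R n).
    by apply: funext => n; rewrite invrK mulrC.
  exact: L2.
Qed.
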